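(* Fix $(\hat\imath,\hat\jmath)\in\mathcal E$ and let $B_1$, $B^n_1$ be the associated matrices (which are invertible). For every probability vector $p\in\mathbb R^I$ with positive entries, $$\vartheta_p=-\frac{\langle e,B_1^{-1}h\rangle}{\langle e,B_1^{-1}p\rangle},\qquad \vartheta^n_p=-\frac{\langle e,(B^n_1)^{-1}h^n\rangle}{\langle e,(B^n_1)^{-1}p\rangle}\quad\text{for every }n.$$
   Context: Network and parameters: $\mathcal I=\{1,\dots,I\}$, $\mathcal J=\{1,\dots,J\}$, edges $\mathcal E\subset\mathcal I\times\mathcal J$ with the bipartite graph $\mathcal G=(\mathcal I\cup\mathcal J,\mathcal E)$ a tree; $i\sim j$ iff $(i,j)\in\mathcal E$, $\mathcal J(i)=\{j:i\sim j\}$, $\mathcal I(j)=\{i:i\sim j\}$; $\mathbb R^{\mathcal G}$ denotes arrays in $\mathbb R^{I\times J}$ vanishing off $\mathcal E$, $\mathbb R^{\mathcal G}_+$ those with nonnegative entries. For each $n\in\mathbb N$: $\lambda^n_i>0$, $\mu^n_{ij}>0$, $N^n_j\in\mathbb N$ with $\lambda^n_i/n\to\lambda_i>0$, $N^n_j/n\to\nu_j>0$, $\mu^n_{ij}\to\mu_{ij}>0$, $\hat\lambda^n_i:=(\lambda^n_i-n\lambda_i)/\sqrt n\to\hat\lambda_i$, $\hat\mu^n_{ij}:=\sqrt n(\mu^n_{ij}-\mu_{ij})\to\hat\mu_{ij}$, $\hat\nu^n_j:=\sqrt n(N^n_j/n-\nu_j)\to\hat\nu_j$. Complete resource pooling: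 the LP ''minimize $\max_j\sum_i\xi_{ij}$ over $\xi\in\mathbb R^{\mathcal G}_+$ subject to $\sum_j\mu_{ij}\nu_j\xi_{ij}=\lambda_i$ $\forall i$'' has a unique solution $\xi^*$, with $\sum_i\xi^*_{ij}=1$ $\forall j$ and $\xi^*_{ij}>0$ for $i\sim j$; $z^*_{ij}:=\xi^*_{ij}\nu_j$. Let $\theta_j:=\hat\nu_j+\sum_{i\in\mathcal I(j)}(\hat\mu_{ij}/\mu_{ij})z^*_{ij}$ and $\theta^n_j:=\hat\nu^n_j+\sum_{i\in\mathcal I(j)}(\hat\mu^n_{ij}/\mu^n_{ij})z^*_{ij}$. SWSS: for a probability vector $p$ with positive entries, $\vartheta_p$ is the (unique) optimal value of: maximize $\vartheta$ over $(\vartheta,\kappa)\in\mathbb R\times\mathbb R^{\mathcal G}$ subject to $\hat\lambda_i\le\sum_{j\in\mathcal J(i)}\mu_{ij}\kappa_{ij}-\vartheta p_i$ $\forall i$ and $\sum_{i\in\mathcal I(j)}\kappa_{ij}=\theta_j$ $\forall j$; $\vartheta^n_p$ is the optimal value of the same program with $\hat\lambda_i,\mu_{ij},\theta_j$ replaced by $\hat\lambda^n_i,\mu^n_{ij},\theta^n_j$. Drift data: $h_i:=\hat\lambda_i-\sum_{j\in\mathcal J(i)}(\mu_{ij}\xi^*_{ij}\hat\nu_j+\hat\mu_{ij}z^*_{ij})$ and $h^n_i:=n^{-1/2}\big(\lambda^n_i-\sum_{j\in\mathcal J(i)}\mu^n_{ij}\xi^*_{ij}N^n_j\big)$. Let $\mathcal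 D=\{(\alpha,\beta)\in\mathbb R^I\times\mathbb R^J:\sum_i\alpha_i=\sum_j\beta_j\}$ and $\Psi:\mathcal D\to\mathbb R^{\mathcal G}$ the unique linear map with $\sum_j\Psi_{ij}(\alpha,\beta)=\alpha_i$, $\sum_i\Psi_{ij}(\alpha,\beta)=\beta_j$. For $(\hat\imath,\hat\jmath)\in\mathcal E$, $B_1\in\mathbb R^{I\times I}$, $B_2\in\mathbb R^{I\times J}$ are the unique matrices with column $\hat\jmath$ of $B_2$ zero and $\sum_{j\in\mathcal J(i)}\mu_{ij}\Psi_{ij}(\alpha,\beta)=(B_1\alpha+B_2\beta)_i$ for all $i$ and $(\alpha,\beta)\in\mathcal D$; $B^n_1,B^n_2$ are defined the same way with $\mu^n_{ij}$ in place of $\mu_{ij}$. $e$ is the all-ones vector. *)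

(* Defs.v *)
From HB Require Import structures.
From mathcomp Require Import all_boot all_order all_algebra.
From mathcomp Require Import all_classical all_reals all_analysis.
Set Implicit Arguments. Unset Strict Implicit. Unset Printing Implicit Defensive.
Import Order.TTheory GRing.Theory Num.Theory.
Import numFieldNormedType.Exports.
Local Open Scope ring_scope.

Section Network.
Variables (I J : nat).

Definition badj (E : {set 'I_I * 'I_J}) : rel ('I_I + 'I_J)%type :=
  fun u v => match u, v with
  | inl i, inr j => (i, j) \in E
  | inr j, inl i => (i, j) \in E
  | _, _ => false
  end.

(** A tree: connected, and every edge is a bridge (removing it disconnects
    its endpoints), i.e. connected and acyclic. *)
Definition is_tree (E : {set 'I_I * 'I_J}) : Prop :=
  (forall u v, connect (badj E) u v) /\
  (forall i j, (i, j) \in E -> ~~ connect (badj (E :\ (i, j))) (inl i) (inr j)).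

(** Arrays in R^G : vanishing off E. *)
Definition inRG (R : ringType) (E : {set 'I_I * 'I_J}) (x : 'M[R]_(I, J)) : Prop :=
  forall i j, (i, j) \notin E -> x i j = 0.

(** max_j a_j <= max_j b_j *)
Definition le_max (R : realDomainType) (a b : 'I_J -> R) : Prop :=
  exists j, forall j', a j' <= b j.

Variable R : realType.

Definition crp_feasible (E : {set 'I_I * 'I_J}) (lam : 'I_I -> R) (mu : 'M[R]_(I, J))
  (nu : 'I_J -> R) (xi : 'M[R]_(I, J)) : Prop :=
  inRG E xi /\ (forall i j, 0 <= xi i j) /\
  (forall i, \sum_(j | (i, j) \in E) mu i j * nu j * xi i j = lam i).

Definition colsum (xi : 'M[R]_(I, J)) : 'I_J -> R := fun j => \sum_i xi i j.

Definition crp_optimal E lam mu nu (xi : 'M[R]_(I, J)) : Prop :=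
  crp_feasible E lam mu nu xi /\
  forall zeta, crp_feasible E lam mu nu zeta -> le_max (colsum xi) (colsum zeta).

Definition crp_unique_solution E lam mu nu (xi : 'M[R]_(I, J)) : Prop :=
  crp_optimal E lam mu nu xi /\
  forall zeta, crp_optimal E lam mu nu zeta -> zeta = xi.

Definition swss_feasible (E : {set 'I_I * 'I_J}) (hlam : 'I_I -> R)
  (mu : 'M[R]_(I, J)) (theta : 'I_J -> R) (p : 'I_I -> R)
  (v : R) (kappa : 'M[R]_(I, J)) : Prop :=
  inRG E kappa /\
  (forall i, hlam i <= \sum_(j | (i, j) \in E) mu i j * kappa i j - v * p i) /\
  (forall j, \sum_(i | (i, j) \in E) kappa i j = theta j).

Definition swss_value E hlam mu theta p (v : R) : Prop :=
  (exists kappa, swss_feasible E hlam mu theta p v kappa) /\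
  (forall v' kappa, swss_feasible E hlam mu theta p v' kappa -> v' <= v).

(** Psi(alpha, beta): any array psi in R^G with row sums alpha and column
    sums beta (it is unique since G is a tree). *)
Definition is_Psi (E : {set 'I_I * 'I_J}) (alpha : 'I_I -> R) (beta : 'I_J -> R)
  (psi : 'M[R]_(I, J)) : Prop :=
  inRG E psi /\ (forall i, \sum_j psi i j = alpha i) /\
  (forall j, \sum_i psi i j = beta j).

Definition is_B_matrices (E : {set 'I_I * 'I_J}) (jh : 'I_J) (mu : 'M[R]_(I, J))
  (B1 : 'M[R]_I) (B2 : 'M[R]_(I, J)) : Prop :=
  (forall i, B2 i jh = 0) /\
  forall (alpha : 'I_I -> R) (beta : 'I_J -> R) (psi : 'M[R]_(I, J)),
    \sum_i alpha i = \sum_j beta j -> is_Psi E alpha beta psi ->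
    forall i, \sum_j mu i j * psi i j =
              \sum_k B1 i k * alpha k + \sum_j B2 i j * beta j.

Definition e_dot_inv (B : 'M[R]_I) (v : 'I_I -> R) : R :=
  \sum_i (invmx B *m \col_k v k) i ord0.

Definition swss_formula (B : 'M[R]_I) (h p : 'I_I -> R) : R :=
  - (e_dot_inv B h / e_dot_inv B p).

End Network.

(* Main.v *)
Require Import Defs.
From HB Require Import structures.
From mathcomp Require Import all_boot all_order all_algebra.
From mathcomp Require Import all_classical all_reals all_analysis.
From mathcomp Require Import ring lra.
Import Order.TTheory GRing.Theory Num.Theory.
Import numFieldNormedType.Exports.
Local Open Scope classical_set_scope.
Local Open Scope ring_scope.

Section Helpers.
Variables (R : realType) (I J : nat) (E : {set 'I_I * 'I_J}).
Hypothesis conn : forall u v, connect (badj E) u v.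

Lemma propagate (P : 'I_I + 'I_J -> Prop) (jh : 'I_J) :
  (forall i j, (i, j) \in E -> (P (inl i) <-> P (inr j))) ->
  P (inr jh) -> forall v, P v.
Proof.
move=> Hedge Hjh v; have /connectP [p Hp ->] := conn (inr jh) v.
elim: p (inr jh) Hjh Hp => [|y p IH] x Px //= /andP [Hxy Hp].
apply: IH Hp; move: Hxy; case: x Px => [i|j]; case: y => [i'|j'] //= Px H.
- by apply/(Hedge _ _ H).
- by apply/(Hedge _ _ H).
Qed.

Definition div (psi : 'M[R]_(I, J)) (x : 'I_I + 'I_J) : R :=
  match x with inl i => \sum_j psi i j | inr j => - \sum_i psi i j end.

Lemma sum_delta_r (i : 'I_I) (j : 'I_J) (k : 'I_I) :
  \sum_l (delta_mx i j : 'M[R]_(I, J)) k l = (k == i)%:R.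
Proof.
rewrite (bigD1 j) //= big1 ?addr0; first by rewrite mxE eqxx andbT.
by move=> l /negbTE hl; rewrite mxE hl andbF.
Qed.

Lemma sum_delta_c (i : 'I_I) (j : 'I_J) (l : 'I_J) :
  \sum_k (delta_mx i j : 'M[R]_(I, J)) k l = (l == j)%:R.
Proof.
rewrite (bigD1 i) //= big1 ?addr0; first by rewrite mxE eqxx.
by move=> k /negbTE hk; rewrite mxE hk.
Qed.

Lemma edge_flow x y : badj E x y -> exists phi : 'M[R]_(I, J), inRG E phi /\
   forall z, div phi z = (z == x)%:R - (z == y)%:R.
Proof.
  case: x => [i|j]; case: y => [i'|j'] //= H.
  - exists (delta_mx i j'); split.
      move=> a b hab; rewrite mxE; case H2: (_ && _) => //.
      by move/andP: H2 => [/eqP ha /eqP hb]; rewrite ha hb H in hab.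
    case=> z /=; first by rewrite sum_delta_r subr0.
    by rewrite sum_delta_c sub0r.
  - exists (- delta_mx i' j); split.
      move=> a b hab; rewrite !mxE; case H2: (_ && _); last by rewrite oppr0.
      by move/andP: H2 => [/eqP ha /eqP hb]; rewrite ha hb H in hab.
    case=> z /=.
      rewrite (eq_bigr (fun l => - (delta_mx i' j : 'M[R]_(I,J)) z l)); last by move=> *; rewrite !mxE.
      by rewrite sumrN sum_delta_r sub0r.
    rewrite (eq_bigr (fun l => - (delta_mx i' j : 'M[R]_(I,J)) l z)); last by move=> *; rewrite !mxE.
    by rewrite sumrN opprK sum_delta_c subr0.
Qed.

Lemma flow_exists u v : exists psi : 'M[R]_(I, J), inRG E psi /\
  forall x, div psi x = (x == u)%:R - (x == v)%:R.
Proof.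
have /connectP [p Hp ->] := conn u v.
elim: p u Hp => [|y p IH] x /=.
  move=> _; exists 0; split=> [i j _|z]; first by rewrite mxE.
  by rewrite subrr /div; case: z => z; rewrite big1 ?oppr0 // => *; rewrite mxE.
move=> /andP [Hxy /IH [psi [Hpsi Hd]]].
have [phi [Hphi Hdphi]] := edge_flow _ _ Hxy.
exists (phi + psi); split.
  by move=> a b hab; rewrite mxE Hphi // Hpsi // addr0.
move=> z; have := Hdphi z; have := Hd z; case: z => z /=.
  have -> : \sum_j (phi + psi) z j = \sum_j phi z j + \sum_j psi z j.
    by rewrite -big_split; apply: eq_bigr => *; rewrite mxE.
  by move=> -> ->; ring.
have -> : \sum_i (phi + psi) i z = \sum_i phi i z + \sum_i psi i z.
  by rewrite -big_split; apply: eq_bigr => *; rewrite mxE.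
by rewrite opprD => -> ->; ring.
Qed.

Lemma sum_mul_delta (T : finType) (F : T -> R) (t : T) :
  \sum_k F k * (k == t)%:R = F t.
Proof.
rewrite (bigD1 t) //= eqxx mulr1 big1 ?addr0 // => k /negbTE ->; by rewrite mulr0.
Qed.

Lemma sum_delta1 (T : finType) (t : T) : \sum_k (k == t)%:R = 1 :> R.
Proof. by rewrite (eq_bigr (fun k => 1 * (k == t)%:R)) ?(sum_mul_delta _ (fun _ => 1)) // => *; rewrite mul1r. Qed.

Lemma flow_rows (ih : 'I_I) (alpha : 'I_I -> R) : \sum_i alpha i = 0 ->
  exists psi : 'M[R]_(I, J), inRG E psi /\ (forall i, \sum_j psi i j = alpha i) /\
     (forall j, \sum_i psi i j = 0).
Proof.
move=> Ha.
pose f i := proj1_sig (cid (flow_exists (inl i) (inl ih))).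
have Hf i : inRG E (f i) /\ forall x, div (f i) x = (x == inl i)%:R - (x == inl ih)%:R.
  exact: (proj2_sig (cid (flow_exists (inl i) (inl ih)))).
exists (\sum_i alpha i *: f i); split; last split.
- move=> a b hab; rewrite summxE big1 // => i _; rewrite mxE (proj1 (Hf i)) //.
  by rewrite mulr0.
- move=> a.
  rewrite (eq_bigr (fun b => \sum_i alpha i * f i a b)); last first.
    by move=> b _; rewrite summxE; apply: eq_bigr => i _; rewrite mxE.
  rewrite exchange_big /=.
  rewrite (eq_bigr (fun i => alpha i * ((a == i)%:R - (a == ih)%:R))); last first.
    move=> i _; rewrite -mulr_sumr; congr (_ * _).
    by have := (proj2 (Hf i)) (inl a).
  rewrite (eq_bigr (fun i => alpha i * (i == a)%:R - alpha i * (a == ih)%:R)); last first.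
    by move=> i _; rewrite mulrBr eq_sym.
  by rewrite sumrB sum_mul_delta -mulr_suml Ha mul0r subr0.
- move=> b.
  rewrite (eq_bigr (fun a => \sum_i alpha i * f i a b)); last first.
    by move=> a _; rewrite summxE; apply: eq_bigr => i _; rewrite mxE.
  rewrite exchange_big /= big1 // => i _.
  rewrite -mulr_sumr.
  have := (proj2 (Hf i)) (inr b); rewrite /= subrr => /eqP; rewrite oppr_eq0 => /eqP ->.
  by rewrite mulr0.
Qed.

Lemma delta_inRG (i : 'I_I) (j : 'I_J) : (i, j) \in E -> inRG E (delta_mx i j : 'M[R]_(I, J)).
Proof.
move=> H a b hab; rewrite mxE; case H2: (_ && _) => //.
by move/andP: H2 => [/eqP ha /eqP hb]; rewrite ha hb H in hab.
Qed.

Lemma sum_inRG (i : 'I_I) (F : 'I_J -> R) : (forall j, (i, j) \notin E -> F j = 0) ->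
  \sum_(j | (i, j) \in E) F j = \sum_j F j.
Proof.
move=> HF; rewrite big_mkcond; apply: eq_bigr => j _.
by case: ifP => // /negbT /HF ->.
Qed.

Lemma sum_inRG_c (j : 'I_J) (F : 'I_I -> R) : (forall i, (i, j) \notin E -> F i = 0) ->
  \sum_(i | (i, j) \in E) F i = \sum_i F i.
Proof.
move=> HF; rewrite big_mkcond; apply: eq_bigr => i _.
by case: ifP => // /negbT /HF ->.
Qed.

Lemma B_edge (jh : 'I_J) (mu : 'M[R]_(I, J)) B1 B2 :
  is_B_matrices E jh mu B1 B2 -> forall i j, (i, j) \in E ->
  forall k, (k == i)%:R * mu i j = B1 k i + B2 k j.
Proof.
move=> [_ HB] i j Hij k.
have := HB (fun k => (k == i)%:R : R) (fun l => (l == j)%:R) (delta_mx i j).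
rewrite !sum_delta1 => /(_ erefl).
have HP : is_Psi E (fun k => (k == i)%:R : R) (fun l => (l == j)%:R) (delta_mx i j).
  by split; [exact: (delta_inRG _ _ Hij) | split => *; rewrite ?sum_delta_r ?sum_delta_c].
move=> /(_ HP k).
rewrite (eq_bigr (fun l => mu k l * (l == j)%:R * (k == i)%:R)); last first.
  by move=> l _; rewrite mxE; case: (k == i); case: (l == j); rewrite /= ?mulr0 ?mulr1 ?mul0r.
rewrite -mulr_suml sum_mul_delta sum_mul_delta.
rewrite (eq_bigr (fun l => B2 k l * (l == j)%:R)) // sum_mul_delta => <-.
by case: (k =P i) => [->|_]; rewrite ?mulr1 ?mul1r ?mulr0 ?mul0r.
Qed.

Lemma swss_generic (ih : 'I_I) (jh : 'I_J) (mu : 'M[R]_(I, J)) B1 B2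
   (hlam theta h p : _ -> R) :
  (forall i j, (i, j) \in E -> 0 < mu i j) ->
  is_B_matrices E jh mu B1 B2 ->
  (forall i, 0 < p i) ->
  (exists kappa0 : 'M[R]_(I, J), inRG E kappa0 /\
     (forall j, \sum_(i | (i, j) \in E) kappa0 i j = theta j) /\
     (forall i, \sum_(j | (i, j) \in E) mu i j * kappa0 i j = hlam i - h i)) ->
  B1 \in unitmx /\ swss_value E hlam mu theta p (swss_formula B1 h p).
Proof.
move=> Hmu HB Hp [kappa0 [K0rg [K0c K0r]]].
have Hedge := B_edge jh mu B1 B2 HB.
have HB2 : forall k, B2 k jh = 0 by case: HB.
have Hunit : B1 \in unitmx.
  rewrite -row_free_unit; apply: inj_row_free => v Hv.
  pose vv i := v ord0 i.
  have Hv0 l : \sum_k vv k * B1 k l = 0.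
    by have := congr1 (fun M : 'M[R]_(1, I) => M ord0 l) Hv; rewrite !mxE.
  pose d j := \sum_k vv k * B2 k j.
  have Hd i j : (i, j) \in E -> vv i * mu i j = d j.
    move=> Hij; rewrite -(sum_mul_delta _ vv i) mulr_suml.
    rewrite (eq_bigr (fun k => vv k * (B1 k i + B2 k j))); last first.
      by move=> k _; rewrite -Hedge // mulrA.
    by rewrite (eq_bigr (fun k => vv k * B1 k i + vv k * B2 k j)) ?big_split /= ?Hv0 ?add0r // => *; rewrite mulrDr.
  have Hall := propagate (fun x => match x with inl i => vv i = 0 | inr j => d j = 0 end) jh.
  apply/rowP => i; rewrite mxE.
  have := Hall _ _ (inl i) => /=.
  apply.
  - move=> a b Hab /=; rewrite -(Hd _ _ Hab); split => [->|]; first by rewrite mul0r.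
    by move/eqP; rewrite mulf_eq0 (gt_eqF (Hmu _ _ Hab)) orbF => /eqP.
  - by rewrite /d big1 // => k _; rewrite HB2 mulr0.
split => //.
pose w k := \sum_i invmx B1 i k.
have W1 l : \sum_k w k * B1 k l = 1.
  rewrite (eq_bigr (fun k => \sum_i invmx B1 i k * B1 k l)); last by move=> k _; rewrite mulr_suml.
  rewrite exchange_big /=.
  rewrite (eq_bigr (fun i => (invmx B1 *m B1) i l)); last by move=> i _; rewrite mxE.
  rewrite mulVmx // (eq_bigr (fun i => (i == l)%:R)); last by move=> i _; rewrite mxE.
  exact: sum_delta1.
pose c j := \sum_k w k * B2 k j.
have Wc i j : (i, j) \in E -> w i * mu i j = 1 + c j.
  move=> Hij; rewrite -(sum_mul_delta _ w i) mulr_suml.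
  rewrite (eq_bigr (fun k => w k * B1 k i + w k * B2 k j)); last first.
    by move=> k _; rewrite -mulrDr -Hedge // mulrA.
  by rewrite big_split /= W1.
have Wpos : forall i, 0 < w i.
  move=> i.
  have := propagate (fun x => match x with inl i => 0 < w i | inr j => 0 < 1 + c j end) jh
    _ _ (inl i); apply.
  - move=> a b Hab /=; rewrite -(Wc _ _ Hab); split => H.
      by rewrite mulr_gt0 // Hmu.
    by rewrite -(pmulr_lgt0 _ (Hmu _ _ Hab)).
  - by rewrite /c big1 ?addr0 // => k _; rewrite HB2 mulr0.
have Edot x : e_dot_inv B1 x = \sum_k w k * x k.
  rewrite /e_dot_inv.
  rewrite (eq_bigr (fun i => \sum_k invmx B1 i k * x k)); last first.
    by move=> i _; rewrite mxE; apply: eq_bigr => k _; rewrite mxE.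
  by rewrite exchange_big /=; apply: eq_bigr => k _; rewrite mulr_suml.
have Key kappa : inRG E kappa ->
  \sum_i w i * \sum_(j | (i, j) \in E) mu i j * kappa i j =
  \sum_j (1 + c j) * \sum_(i | (i, j) \in E) kappa i j.
  move=> Hk.
  rewrite (eq_bigr (fun i => \sum_j (1 + c j) * kappa i j)); last first.
    move=> i _; rewrite sum_inRG; last by move=> j hj; rewrite Hk // mulr0.
    rewrite mulr_sumr; apply: eq_bigr => j _.
    case hij: ((i, j) \in E); first by rewrite mulrA Wc.
    by rewrite Hk ?hij // !mulr0.
  rewrite exchange_big /=; apply: eq_bigr => j _.
  by rewrite sum_inRG_c ?mulr_sumr // => i hi; rewrite Hk.
have Wp : 0 < \sum_k w k * p k.
  rewrite (bigD1 ih) //= ltr_pwDl ?mulr_gt0 // sumr_ge0 // => k _.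
  by rewrite mulr_ge0 // ltW.
rewrite /swss_formula !Edot.
set Wh := \sum_k w k * h k; set Wpp := \sum_k w k * p k.
have K0 : \sum_k w k * (hlam k - h k) = \sum_j (1 + c j) * theta j.
  transitivity (\sum_j (1 + c j) * \sum_(i | (i, j) \in E) kappa0 i j).
    by rewrite -Key //; apply: eq_bigr => k _; rewrite K0r.
  by apply: eq_bigr => j _; rewrite K0c.
split; last first.
  move=> v' kappa [Hkrg [Hkr Hkc]].
  have Hle : \sum_k w k * (hlam k + v' * p k) <= \sum_j (1 + c j) * theta j.
    rewrite (eq_bigr (fun j => (1 + c j) * \sum_(i | (i, j) \in E) kappa i j)); last first.
      by move=> j _; rewrite Hkc.
    rewrite -Key //; apply: ler_sum => k _; rewrite ler_pM2l //.
    by have := Hkr k; lra.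
  move: Hle; rewrite -K0.
  rewrite (eq_bigr (fun k => w k * hlam k + v' * (w k * p k))); last first.
    by move=> k _; rewrite mulrDr mulrCA.
  rewrite [X in _ <= X](eq_bigr (fun k => w k * hlam k - w k * h k)); last first.
    by move=> k _; rewrite mulrBr.
  rewrite big_split sumrB /= -mulr_sumr -/Wpp -/Wh lerD2l => H.
  by rewrite -mulNr ler_pdivlMr //; lra.
set vs := - (Wh / Wpp).
pose r i := h i + vs * p i.
pose alpha i := \sum_k invmx B1 i k * r k.
have Halpha : \sum_i alpha i = 0.
  rewrite /alpha exchange_big /=.
  rewrite (eq_bigr (fun k => w k * r k)); last by move=> k _; rewrite mulr_suml.
  rewrite /r (eq_bigr (fun k => w k * h k + vs * (w k * p k))); last first.
    by move=> k _; rewrite mulrDr mulrCA.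
  rewrite big_split /= -mulr_sumr -/Wpp -/Wh /vs mulNr divfK ?subrr //.
  exact: lt0r_neq0.
have [psi [Prg [Pr Pc]]] := flow_rows ih alpha Halpha.
have Psir k : \sum_j mu k j * psi k j = r k.
  have := (proj2 HB) alpha (fun _ => 0) psi.
  rewrite Halpha big1 // => /(_ erefl).
  have HP : is_Psi E alpha (fun _ => 0) psi by split.
  move=> /(_ HP k) ->; rewrite [X in _ + X]big1 ?addr0; last by move=> *; rewrite mulr0.
  rewrite /alpha (eq_bigr (fun l => \sum_m B1 k l * invmx B1 l m * r m)); last first.
    by move=> l _; rewrite mulr_sumr; apply: eq_bigr => *; rewrite mulrA.
  rewrite exchange_big /=.
  rewrite (eq_bigr (fun m => (B1 *m invmx B1) k m * r m)); last first.
    by move=> m _; rewrite mxE mulr_suml.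
  rewrite mulmxV // (eq_bigr (fun m => r m * (m == k)%:R)) ?sum_mul_delta //.
  by move=> m _; rewrite mxE mulrC eq_sym.
exists (kappa0 + psi); split.
- by move=> a b hab; rewrite mxE K0rg // Prg // addr0.
split.
- move=> i; rewrite (eq_bigr (fun j => mu i j * kappa0 i j + mu i j * psi i j)); last first.
    by move=> j _; rewrite mxE mulrDr.
  rewrite big_split /= K0r sum_inRG; last by move=> j hj; rewrite Prg // mulr0.
  by rewrite Psir /r; lra.
- move=> j; rewrite (eq_bigr (fun i => kappa0 i j + psi i j)); last by move=> *; rewrite mxE.
  rewrite big_split /= K0c sum_inRG_c; last by move=> i hi; rewrite Prg.
  by rewrite Pc addr0.
Qed.
End Helpers.

Lemma alg_n (R : realType) (s nR N m mn nv x : R) : s * s = nR -> s != 0 -> mn != 0 ->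
  x * (N - nR * m * nv / mn) / s = x * (s * (N / nR - nv)) + s * (mn - m) / mn * (x * nv).
Proof. move=> <- hs hm; field; by rewrite hs hm. Qed.

Theorem theorem4 (R : realType) (I J : nat) (E : {set 'I_I * 'I_J})
  (lamn : nat -> 'I_I -> R) (mun : nat -> 'M[R]_(I, J)) (Nn : nat -> 'I_J -> nat)
  (lam : 'I_I -> R) (mu : 'M[R]_(I, J)) (nu : 'I_J -> R)
  (hlam : 'I_I -> R) (hmu : 'M[R]_(I, J)) (hnu : 'I_J -> R)
  (xis : 'M[R]_(I, J)) (ih : 'I_I) (jh : 'I_J)
  (B1 : 'M[R]_I) (B2 : 'M[R]_(I, J))
  (B1n : nat -> 'M[R]_I) (B2n : nat -> 'M[R]_(I, J)) :
  is_tree E ->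
  (* parameters *)
  (forall n i, (0 < n)%N -> 0 < lamn n i) ->
  (forall n i j, (0 < n)%N -> (i, j) \in E -> 0 < mun n i j) ->
  (forall i, 0 < lam i) -> (forall j, 0 < nu j) ->
  (forall i j, (i, j) \in E -> 0 < mu i j) ->
  (forall i, (fun n : nat => lamn n i / n%:R) @ \oo --> lam i) ->
  (forall j, (fun n : nat => (Nn n j)%:R / n%:R) @ \oo --> nu j) ->
  (forall i j, (i, j) \in E -> (fun n : nat => mun n i j) @ \oo --> mu i j) ->
  (forall i, (fun n : nat => (lamn n i - n%:R * lam i) / Num.sqrt n%:R) @ \oo --> hlam i) ->
  (forall i j, (i, j) \in E ->
     (fun n : nat => Num.sqrt n%:R * (mun n i j - mu i j)) @ \oo --> hmu i j) ->
  (forall j, (fun n : nat => Num.sqrt n%:R * ((Nn n j)%:R / n%:R - nu j)) @ \oo --> hnu j) ->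
  (* complete resource pooling *)
  crp_unique_solution E lam mu nu xis ->
  (forall j, \sum_i xis i j = 1) ->
  (forall i j, (i, j) \in E -> 0 < xis i j) ->
  (* the fixed edge and the associated matrices *)
  (ih, jh) \in E ->
  is_B_matrices E jh mu B1 B2 ->
  (forall n, (0 < n)%N -> is_B_matrices E jh (mun n) (B1n n) (B2n n)) ->
  let zs := fun i j => xis i j * nu j in
  let theta := fun j => hnu j + \sum_(i | (i, j) \in E) (hmu i j / mu i j) * zs i j in
  let h := fun i => hlam i -
       \sum_(j | (i, j) \in E) (mu i j * xis i j * hnu j + hmu i j * zs i j) in
  let hlamn := fun n i => (lamn n i - n%:R * lam i) / Num.sqrt n%:R in
  let hmun := fun n i j => Num.sqrt n%:R * (mun n i j - mu i j) in
  let hnun := fun n j => Num.sqrt n%:R * ((Nn n j)%:R / n%:R - nu j) in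
  let thetan := fun n j => hnun n j +
       \sum_(i | (i, j) \in E) (hmun n i j / mun n i j) * zs i j in
  let hn := fun n i => (Num.sqrt n%:R)^-1 *
       (lamn n i - \sum_(j | (i, j) \in E) mun n i j * xis i j * (Nn n j)%:R) in
  B1 \in unitmx /\ (forall n, (0 < n)%N -> B1n n \in unitmx) /\
  forall p : 'I_I -> R, (forall i, 0 < p i) -> \sum_i p i = 1 ->
    swss_value E hlam mu theta p (swss_formula B1 h p) /\
    (forall n, (0 < n)%N ->
       swss_value E (hlamn n) (mun n) (thetan n) p (swss_formula (B1n n) (hn n) p)).
Proof.
move=> Htree Hlamn Hmun Hlam Hnu Hmu _ _ _ _ _ _ Hcrp Hxs Hxpos Hihjh HB HBn.
move=> zs theta h hlamn hmun hnun thetan hn.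
have conn := proj1 Htree.
have [[Xrg [_ Xlam]] _] := proj1 Hcrp.
have XE j : \sum_(i | (i, j) \in E) xis i j = 1.
  by rewrite sum_inRG_c ?Hxs // => i hi; rewrite Xrg.
pose k0 := \matrix_(i, j) (if (i, j) \in E then xis i j * hnu j + hmu i j / mu i j * zs i j
                           else 0 : R).
have K0 : exists kappa0 : 'M[R]_(I, J), inRG E kappa0 /\
     (forall j, \sum_(i | (i, j) \in E) kappa0 i j = theta j) /\
     (forall i, \sum_(j | (i, j) \in E) mu i j * kappa0 i j = hlam i - h i).
  exists k0; split; last split.
  - by move=> i j hij; rewrite mxE (negbTE hij).
  - move=> j; rewrite (eq_bigr (fun i => xis i j * hnu j + hmu i j / mu i j * zs i j)); last first.
      by move=> i hi; rewrite mxE hi.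
    by rewrite big_split /= -mulr_suml XE mul1r.
  - move=> i; rewrite (eq_bigr (fun j => mu i j * xis i j * hnu j + hmu i j * zs i j)); last first.
      by move=> j hj; rewrite mxE hj; field; rewrite gt_eqF // Hmu.
    by rewrite /h; ring.
split; first by have [] := swss_generic R I J E conn ih jh mu B1 B2 hlam theta h (fun _ => 1)
   Hmu HB (fun _ => ltr01) K0.
have Kn n : (0 < n)%N -> exists kappa0 : 'M[R]_(I, J), inRG E kappa0 /\
     (forall j, \sum_(i | (i, j) \in E) kappa0 i j = thetan n j) /\
     (forall i, \sum_(j | (i, j) \in E) mun n i j * kappa0 i j = hlamn n i - hn n i).
  move=> n0.
  have s0 : 0 < Num.sqrt n%:R :> R by rewrite sqrtr_gt0 ltr0n.
  have ss : Num.sqrt n%:R * Num.sqrt n%:R = n%:R :> R.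
    by rewrite -expr2 sqr_sqrtr // ler0n.
  exists (\matrix_(i, j) (if (i, j) \in E then xis i j *
      ((Nn n j)%:R - n%:R * mu i j * nu j / mun n i j) / Num.sqrt n%:R else 0 : R)).
  split; last split.
  - by move=> i j hij; rewrite mxE (negbTE hij).
  - move=> j.
    rewrite (eq_bigr (fun i => xis i j * (Num.sqrt n%:R * ((Nn n j)%:R / n%:R - nu j)) +
         Num.sqrt n%:R * (mun n i j - mu i j) / mun n i j * (xis i j * nu j))); last first.
      move=> i hi; rewrite mxE hi; apply: alg_n => //; first by rewrite gt_eqF.
      by rewrite gt_eqF //; apply: Hmun.
    by rewrite big_split /= -mulr_suml XE mul1r.
  - move=> i.
    have H1 : \sum_(j | (i, j) \in E) mun n i j * (\matrix_(i0, j0)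
        (if (i0, j0) \in E then xis i0 j0 * ((Nn n j0)%:R - n%:R * mu i0 j0 * nu j0 /
          mun n i0 j0) / Num.sqrt n%:R else 0 : R)) i j =
        \sum_(j | (i, j) \in E) (mun n i j * xis i j * (Nn n j)%:R / Num.sqrt n%:R -
            n%:R / Num.sqrt n%:R * (mu i j * nu j * xis i j)).
      apply: eq_bigr => j hj; rewrite mxE hj; field.
      by rewrite !gt_eqF //; apply: Hmun.
    rewrite H1 sumrB -mulr_sumr Xlam /hlamn /hn -mulr_suml.
    by field; rewrite gt_eqF.
split.
  move=> n n0.
  have Hmn : forall i j, (i, j) \in E -> 0 < mun n i j by move=> i j; apply: Hmun.
  by have [] := swss_generic R I J E conn ih jh (mun n) (B1n n) (B2n n) (hlamn n) (thetan n)
   (hn n) (fun _ => 1) Hmn (HBn n n0) (fun _ => ltr01) (Kn n n0).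
move=> p Hp _; split.
  by have [] := swss_generic R I J E conn ih jh mu B1 B2 hlam theta h p Hmu HB Hp K0.
move=> n n0.
have Hmn : forall i j, (i, j) \in E -> 0 < mun n i j by move=> i j; apply: Hmun.
by have [] := swss_generic R I J E conn ih jh (mun n) (B1n n) (B2n n) (hlamn n) (thetan n)
   (hn n) p Hmn (HBn n n0) Hp (Kn n n0).
Qed.
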